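(* Let $A\in\mathcal{C}_n$ and let $w\in\mathbb{R}^n$ be nonzero. Then $A$ is irreducible with respect to $ww^T$ if and only if there exists a minimal zero $u$ of $A$ with $w^Tu\ne0$.
   Context: $\mathcal{C}_n$ denotes the cone of copositive matrices: real symmetric $n\times n$ matrices $A$ with $x^TAx\ge 0$ for all $x\in\mathbb{R}^n_+$. For a nonzero matrix $M$, $A$ is irreducible with respect to $M$ if there does not exist $\gamma>0$ with $A-\gamma M\in\mathcal{C}_n$. A zero of $A$ is a nonzero $u\in\mathbb{R}^n_+$ with $u^TAu=0$; $\operatorname{Supp}(u)=\{i:u_i\ne0\}$; a zero $u$ is minimal if there is no zero $v$ with $\operatorname{Supp}(v)\subsetneq\operatorname{Supp}(u)$. *)

(* Defs.v *)
(* real numbers are Stdlib's R.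
   Vectors in R^n are functions nat -> R (only indices 0..n-1 matter);
   n x n matrices are functions nat -> nat -> R (only indices < n matter). *)
From Stdlib Require Import Reals.
Open Scope R_scope.

Definition vec := nat -> R.
Definition mat := nat -> nat -> R.

Fixpoint sumn (n : nat) (f : nat -> R) : R :=
  match n with
  | O => 0
  | S k => sumn k f + f k
  end.

Definition qform (n : nat) (A : mat) (x y : vec) : R :=
  sumn n (fun i => sumn n (fun j => x i * A i j * y j)).

Definition dot (n : nat) (w u : vec) : R := sumn n (fun i => w i * u i).

Definition symmetric (n : nat) (A : mat) : Prop :=
  forall i j, (i < n)%nat -> (j < n)%nat -> A i j = A j i.

Definition nonneg (n : nat) (x : vec) : Prop :=
  forall i, (i < n)%nat -> 0 <= x i.

Definition nonzero_vec (n : nat) (x : vec) : Prop :=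
  exists i, (i < n)%nat /\ x i <> 0.

Definition copositive (n : nat) (A : mat) : Prop :=
  symmetric n A /\ forall x, nonneg n x -> 0 <= qform n A x x.

Definition msub_scal (A : mat) (gamma : R) (M : mat) : mat :=
  fun i j => A i j - gamma * M i j.

(* A irreducible with respect to M (M assumed nonzero by the user) *)
Definition irreducible_wrt (n : nat) (A M : mat) : Prop :=
  ~ exists gamma, 0 < gamma /\ copositive n (msub_scal A gamma M).

Definition outer (w : vec) : mat := fun i j => w i * w j.

Definition is_zero_of (n : nat) (A : mat) (u : vec) : Prop :=
  nonneg n u /\ nonzero_vec n u /\ qform n A u u = 0.

Definition supp_strict_sub (n : nat) (v u : vec) : Prop :=
  (forall i, (i < n)%nat -> v i <> 0 -> u i <> 0) /\
  (exists i, (i < n)%nat /\ u i <> 0 /\ v i = 0).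

Definition minimal_zero (n : nat) (A : mat) (u : vec) : Prop :=
  is_zero_of n A u /\ ~ exists v, is_zero_of n A v /\ supp_strict_sub n v u.

(* Main.v *)
Require Import Defs.
From Stdlib Require Import Reals Lra Lia Classical List.
From Coquelicot Require Import Compactness.
Open Scope R_scope.


Lemma sumn_ext n f g : (forall i, (i < n)%nat -> f i = g i) -> sumn n f = sumn n g.
Proof. induction n; intros H; simpl; auto. rewrite IHn by (intros; apply H; lia). rewrite H by lia. auto. Qed.

Lemma sumn_lin n a b f g : sumn n (fun i => a * f i + b * g i) = a * sumn n f + b * sumn n g.
Proof. induction n; simpl; [ring|]. rewrite IHn. ring. Qed.

Lemma sumn_plus n f g : sumn n (fun i => f i + g i) = sumn n f + sumn n g.
Proof. induction n; simpl; [ring|]. rewrite IHn. ring. Qed.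

Lemma sumn_scal n c f : sumn n (fun i => c * f i) = c * sumn n f.
Proof. induction n; simpl; [ring|]. rewrite IHn. ring. Qed.

Lemma sumn_zero n f : (forall i, (i < n)%nat -> f i = 0) -> sumn n f = 0.
Proof. induction n; intros H; simpl; auto. rewrite IHn by (intros; apply H; lia). rewrite H by lia. ring. Qed.

Lemma sumn_le n f g : (forall i, (i < n)%nat -> f i <= g i) -> sumn n f <= sumn n g.
Proof. induction n; intros H; simpl; [lra|]. assert (H1 := H n ltac:(lia)).
 assert (sumn n f <= sumn n g) by (apply IHn; intros; apply H; lia). lra. Qed.

Lemma sumn_nonneg n f : (forall i, (i < n)%nat -> 0 <= f i) -> 0 <= sumn n f.
Proof. intros H. replace 0 with (sumn n (fun _ => 0)). apply sumn_le; auto.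
 apply sumn_zero; auto. Qed.

Lemma sumn_pos n f i0 : (forall i, (i < n)%nat -> 0 <= f i) -> (i0 < n)%nat -> 0 < f i0 -> 0 < sumn n f.
Proof. induction n; intros H Hi Hp; simpl; [lia|].
 destruct (Nat.eq_dec i0 n).
 - subst. assert (0 <= sumn n f) by (apply sumn_nonneg; intros; apply H; lia). lra.
 - assert (0 < sumn n f) by (apply IHn; [intros; apply H; lia | lia | auto]). assert (H1 := H n ltac:(lia)). lra. Qed.

Lemma sumn_abs n f : Rabs (sumn n f) <= sumn n (fun i => Rabs (f i)).
Proof. induction n; simpl. rewrite Rabs_R0; lra.
 eapply Rle_trans. apply Rabs_triang. lra. Qed.

Definition ev (i : nat) : vec := fun j => if Nat.eqb j i then 1 else 0.

Lemma sumn_kron n f i : (i < n)%nat -> sumn n (fun j => f j * ev i j) = f i.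
Proof. induction n; intros H; simpl; [lia|]. unfold ev at 2.
 destruct (Nat.eqb_spec n i).
 - subst i. rewrite sumn_zero. ring. intros j Hj. unfold ev. destruct (Nat.eqb_spec j n); [lia|ring].
 - rewrite IHn by lia. ring. Qed.

Lemma sumn_swap n m (f : nat -> nat -> R) :
  sumn n (fun i => sumn m (fun j => f i j)) = sumn m (fun j => sumn n (fun i => f i j)).
Proof. induction n; simpl. symmetry; apply sumn_zero; auto.
 rewrite IHn. rewrite <- sumn_plus. auto. Qed.

Lemma sumn_sq n a : sumn n (fun i => sumn n (fun j => a i * a j)) = sumn n a * sumn n a.
Proof. rewrite (sumn_ext n _ (fun i => a i * sumn n a)).
 rewrite (sumn_ext n _ (fun i => sumn n a * a i)). apply sumn_scal. intros; ring.
 intros. apply sumn_scal. Qed.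

Definition colA (n : nat) (A : mat) (u : vec) (j : nat) : R := sumn n (fun i => u i * A i j).

Lemma qform_col n A x y : qform n A x y = sumn n (fun j => colA n A x j * y j).
Proof. unfold qform, colA. rewrite sumn_swap. apply sumn_ext. intros j _.
 rewrite (sumn_ext n _ (fun i => y j * (x i * A i j))) by (intros; ring).
 rewrite sumn_scal. ring. Qed.

Lemma qform_sym n A x y : symmetric n A -> qform n A x y = qform n A y x.
Proof. intros HS. unfold qform. rewrite sumn_swap. apply sumn_ext; intros i Hi.
 apply sumn_ext; intros j Hj. rewrite (HS j i) by auto. ring. Qed.

Definition vadd (x : vec) (s : R) (y : vec) : vec := fun i => x i + s * y i.

Lemma qform_lin_l n A x s y z : qform n A (vadd x s y) z = qform n A x z + s * qform n A y z.
Proof. unfold qform, vadd.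
 rewrite (sumn_ext n _ (fun i => 1 * sumn n (fun j => x i * A i j * z j) + s * sumn n (fun j => y i * A i j * z j))).
 rewrite sumn_lin. ring.
 intros i _. rewrite <- sumn_lin. apply sumn_ext. intros; ring. Qed.

Lemma qform_lin_r n A x s y z : qform n A z (vadd x s y) = qform n A z x + s * qform n A z y.
Proof. unfold qform, vadd.
 rewrite (sumn_ext n _ (fun i => 1 * sumn n (fun j => z i * A i j * x j) + s * sumn n (fun j => z i * A i j * y j))).
 rewrite sumn_lin. ring.
 intros i _. rewrite <- sumn_lin. apply sumn_ext. intros; ring. Qed.

Lemma qform_expand n A x s y : symmetric n A ->
  qform n A (vadd x s y) (vadd x s y) = qform n A x x + 2 * s * qform n A x y + s * s * qform n A y y.
Proof. intros HS. rewrite qform_lin_l, !qform_lin_r. rewrite (qform_sym n A y x HS). ring. Qed.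

Lemma qform_ev n A x j : (j < n)%nat -> qform n A x (ev j) = colA n A x j.
Proof. intros. rewrite qform_col. apply sumn_kron; auto. Qed.

Lemma qform_evev n A j : (j < n)%nat -> qform n A (ev j) (ev j) = A j j.
Proof. intros. rewrite qform_ev by auto. unfold colA.
 rewrite (sumn_ext n _ (fun i => A i j * ev j i)) by (intros; unfold ev; ring).
 apply (sumn_kron n (fun k => A k j)); auto. Qed.

Lemma qform_msub n A g w x : qform n (msub_scal A g (outer w)) x x = qform n A x x - g * (dot n w x) * (dot n w x).
Proof. unfold qform, msub_scal, outer, dot.
 rewrite (sumn_ext n _ (fun i => 1 * sumn n (fun j => x i * A i j * x j) + (- g) * sumn n (fun j => (w i * x i) * (w j * x j)))).
 rewrite sumn_lin. rewrite (sumn_sq n (fun i => w i * x i)). ring.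
 intros i _. rewrite <- sumn_lin. apply sumn_ext. intros; ring. Qed.

Lemma foc_aux n A u j s : copositive n A -> Defs.nonneg n u -> qform n A u u = 0 -> (j < n)%nat ->
  Defs.nonneg n (vadd u s (ev j)) ->
  0 <= 2 * s * colA n A u j + s * s * A j j.
Proof. intros [HS HC] Hu Hq Hj Hn. assert (H := HC _ Hn).
 rewrite qform_expand in H by auto. rewrite Hq, qform_ev, qform_evev in H by auto. lra. Qed.

Lemma foc_nonneg n A u j : copositive n A -> Defs.nonneg n u -> qform n A u u = 0 -> (j < n)%nat ->
  0 <= colA n A u j.
Proof. intros HC Hu Hq Hj. set (p := colA n A u j). set (a := A j j).
 destruct (Rle_or_lt 0 p) as [|Hp]; auto. exfalso.
 set (m := - p / (Rabs a + 1)).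
 assert (Ha : 0 <= Rabs a) by apply Rabs_pos.
 assert (Hm : 0 < m) by (unfold m; apply Rdiv_lt_0_compat; lra).
 assert (Hm2 : m * (Rabs a + 1) = - p) by (unfold m; field; lra).
 assert (Hn : Defs.nonneg n (vadd u m (ev j))).
 { intros i Hi. unfold vadd, ev. assert (0 <= u i) by (apply Hu; auto). destruct (Nat.eqb i j); lra. }
 assert (H := foc_aux n A u j m HC Hu Hq Hj Hn). fold p a in H.
 assert (m * a <= m * Rabs a) by (apply Rmult_le_compat_l; [lra| apply Rle_abs]).
 nra. Qed.

Lemma foc_zero n A u j : copositive n A -> Defs.nonneg n u -> qform n A u u = 0 -> (j < n)%nat ->
  u j <> 0 -> colA n A u j = 0.
Proof. intros HC Hu Hq Hj Huj.
 assert (H0 := foc_nonneg n A u j HC Hu Hq Hj).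
 set (p := colA n A u j) in *. set (a := A j j).
 destruct (Req_dec p 0) as [|Hp]; auto. exfalso.
 assert (Hpp : 0 < p) by lra.
 assert (Huj' : 0 < u j) by (assert (0 <= u j) by (apply Hu; auto); lra).
 assert (Ha : 0 <= Rabs a) by apply Rabs_pos.
 set (m := Rmin (u j) (p / (Rabs a + 1))).
 assert (Hm : 0 < m) by (unfold m; apply Rmin_glb_lt; auto; apply Rdiv_lt_0_compat; lra).
 assert (Hm1 : m <= u j) by apply Rmin_l.
 assert (Hm2 : m <= p / (Rabs a + 1)) by apply Rmin_r.
 assert (Hm3 : m * (Rabs a + 1) <= p).
 { apply (Rmult_le_compat_r (Rabs a + 1)) in Hm2; [|lra].
   replace (p / (Rabs a + 1) * (Rabs a + 1)) with p in Hm2 by (field; lra). lra. }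
 assert (Hn : Defs.nonneg n (vadd u (- m) (ev j))).
 { intros i Hi. unfold vadd, ev. assert (0 <= u i) by (apply Hu; auto).
   destruct (Nat.eqb_spec i j). subst; lra. lra. }
 assert (H := foc_aux n A u j (- m) HC Hu Hq Hj Hn). fold p a in H.
 assert (m * a <= m * Rabs a) by (apply Rmult_le_compat_l; [lra| apply Rle_abs]).
 nra. Qed.

Lemma qform_zero_cross n A u y : copositive n A -> Defs.nonneg n u -> qform n A u u = 0 ->
  (forall j, (j < n)%nat -> y j <> 0 -> u j <> 0) -> qform n A u y = 0.
Proof. intros HC Hu Hq Hy. rewrite qform_col. apply sumn_zero. intros j Hj.
 destruct (Req_dec (y j) 0) as [E|E]. rewrite E; ring.
 rewrite (foc_zero n A u j) by auto. ring. Qed.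

Lemma qform_cross_nonneg n A u y : copositive n A -> Defs.nonneg n u -> qform n A u u = 0 ->
  Defs.nonneg n y -> 0 <= qform n A u y.
Proof. intros HC Hu Hq Hy. rewrite qform_col. apply sumn_nonneg. intros j Hj.
 apply Rmult_le_pos. apply foc_nonneg; auto. apply Hy; auto. Qed.

Fixpoint suppc (n : nat) (u : vec) : nat :=
  match n with
  | O => O
  | S k => (suppc k u + (if Req_EM_T (u k) 0 then 0 else 1))%nat
  end.

Lemma suppc_le n u v : (forall i, (i < n)%nat -> v i <> 0 -> u i <> 0) -> (suppc n v <= suppc n u)%nat.
Proof. induction n; intros H; simpl; [lia|].
 assert (IH : (suppc n v <= suppc n u)%nat) by (apply IHn; intros; apply H; auto; lia).
 destruct (Req_EM_T (v n) 0); destruct (Req_EM_T (u n) 0); try lia.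
 exfalso; apply (H n); auto. Qed.

Lemma suppc_lt n u v : (forall i, (i < n)%nat -> v i <> 0 -> u i <> 0) ->
  (exists i, (i < n)%nat /\ u i <> 0 /\ v i = 0) -> (suppc n v < suppc n u)%nat.
Proof. induction n; intros H [i [Hi [Hu Hv]]]; simpl; [lia|].
 destruct (Nat.eq_dec i n).
 - subst i. assert (suppc n v <= suppc n u)%nat by (apply suppc_le; intros; apply H; auto; lia).
   destruct (Req_EM_T (v n) 0); destruct (Req_EM_T (u n) 0); try lia; contradiction.
 - assert (IH : (suppc n v < suppc n u)%nat).
   { apply IHn. intros; apply H; auto; lia. exists i; repeat split; auto; lia. }
   destruct (Req_EM_T (v n) 0); destruct (Req_EM_T (u n) 0); try lia.
   exfalso; apply (H n); auto. Qed.

Lemma argmin_ex n (P : nat -> Prop) (r : nat -> R) :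
  (exists i, (i < n)%nat /\ P i) -> exists i0, (i0 < n)%nat /\ P i0 /\ forall i, (i < n)%nat -> P i -> r i0 <= r i.
Proof. induction n; intros [i [Hi HP]]; [lia|].
 destruct (classic (exists i, (i < n)%nat /\ P i)) as [He|He].
 - destruct (IHn He) as [i0 [H0 [HP0 Hm]]].
   destruct (classic (P n)) as [Pn|Pn].
   + destruct (Rle_or_lt (r i0) (r n)).
     * exists i0; repeat split; auto. intros j Hj Pj. destruct (Nat.eq_dec j n). subst; auto. apply Hm; auto; lia.
     * exists n; repeat split; auto. intros j Hj Pj. destruct (Nat.eq_dec j n). subst; lra.
       assert (r i0 <= r j) by (apply Hm; auto; lia). lra.
   + exists i0; repeat split; auto. intros j Hj Pj. destruct (Nat.eq_dec j n). subst; contradiction. apply Hm; auto; lia.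
 - assert (i = n). { destruct (Nat.eq_dec i n); auto. exfalso; apply He; exists i; split; auto; lia. }
   subst i. exists n; repeat split; auto. intros j Hj Pj. destruct (Nat.eq_dec j n). subst; lra.
   exfalso; apply He; exists j; split; auto; lia. Qed.

Lemma dot_vadd n w x s y : dot n w (vadd x s y) = dot n w x + s * dot n w y.
Proof. unfold dot, vadd. rewrite (sumn_ext n _ (fun i => 1 * (w i * x i) + s * (w i * y i))).
 rewrite sumn_lin; ring. intros; ring. Qed.

Lemma dot_nz n w x : dot n w x <> 0 -> nonzero_vec n x.
Proof. intros H. apply NNPP. intros Hn. apply H. unfold dot. apply sumn_zero. intros i Hi.
 destruct (Req_dec (x i) 0) as [E|E]. rewrite E; ring. exfalso; apply Hn; exists i; auto. Qed.

Lemma min_zero_exists n A w : copositive n A -> forall u, is_zero_of n A u -> dot n w u <> 0 ->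
  exists v, minimal_zero n A v /\ dot n w v <> 0.
Proof. intros HC.
 assert (forall k u, (suppc n u <= k)%nat -> is_zero_of n A u -> dot n w u <> 0 ->
   exists v, minimal_zero n A v /\ dot n w v <> 0).
 2:{ intros u; apply (H (suppc n u) u); auto. }
 induction k; intros u Hk Hz Hd.
 - destruct (classic (minimal_zero n A u)) as [Hm|Hm]. exists u; auto.
   exfalso. apply Hm. split; auto. intros [v [Hv Hs]].
   assert (suppc n v < suppc n u)%nat by (apply suppc_lt; apply Hs). lia.
 - destruct (classic (minimal_zero n A u)) as [Hm|Hm]. exists u; auto.
   destruct (classic (exists v, is_zero_of n A v /\ supp_strict_sub n v u)) as [[v [Hv Hs]]|Hn].
   2:{ exfalso; apply Hm; split; auto. }
   assert (Hlt : (suppc n v < suppc n u)%nat) by (apply suppc_lt; apply Hs).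
   destruct (Req_dec (dot n w v) 0) as [Hdv|Hdv].
   2:{ apply (IHk v); auto. lia. }
   destruct Hz as [Hu [Hunz Hq]]. destruct Hv as [Hvn [[iv [Hiv Hvi]] Hqv]].
   destruct Hs as [Hsub Hstr].
   destruct (argmin_ex n (fun i => v i <> 0) (fun i => u i / v i)) as [i0 [Hi0 [Hv0 Hmin]]].
   { exists iv; auto. }
   set (t := u i0 / v i0).
   assert (Hv0p : 0 < v i0) by (assert (0 <= v i0) by (apply Hvn; auto); lra).
   assert (Hu0p : 0 < u i0) by (assert (0 <= u i0) by (apply Hu; auto); assert (u i0 <> 0) by (apply Hsub; auto); lra).
   set (u' := vadd u (- t) v).
   assert (Hdu' : dot n w u' = dot n w u) by (unfold u'; rewrite dot_vadd, Hdv; ring).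
   apply (IHk u').
   + assert (suppc n u' < suppc n u)%nat.
     { apply suppc_lt.
       - intros i Hi Hne. intros Hui. apply Hne. unfold u', vadd.
         assert (v i = 0). { destruct (Req_dec (v i) 0); auto. exfalso; apply (Hsub i Hi); auto. }
         rewrite Hui, H; ring.
       - exists i0; split; [auto|split; [intro; lra|]]. unfold u', vadd, t. field; lra. }
     lia.
   + split; [|split].
     * intros i Hi. unfold u', vadd. destruct (Req_dec (v i) 0) as [E|E].
       rewrite E. assert (0 <= u i) by (apply Hu; auto). lra.
       assert (Hr := Hmin i Hi E). fold t in Hr.
       assert (0 < v i) by (assert (0 <= v i) by (apply Hvn; auto); lra).
       apply (Rmult_le_compat_r (v i)) in Hr; [|lra].
       replace (u i / v i * v i) with (u i) in Hr by (field; lra). lra.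
     * apply (dot_nz n w). rewrite Hdu'; auto.
     * unfold u'. rewrite qform_expand by (apply HC). rewrite Hq, Hqv.
       rewrite (qform_zero_cross n A u v) by auto. ring.
   + rewrite Hdu'; auto.
Qed.

Lemma abs_le a b : Rabs a <= b -> - b <= a <= b.
Proof. unfold Rabs; destruct (Rcase_abs a); lra. Qed.

Definition inbox (n : nat) (x : vec) : Prop := forall i, (i < n)%nat -> 0 <= x i <= 1.

Definition Lip (n : nat) (F : vec -> R) : Prop :=
  exists K B, 0 <= K /\ 0 <= B /\ (forall x, inbox n x -> Rabs (F x) <= B) /\
   (forall x t d, inbox n x -> inbox n t -> 0 <= d -> (forall i, (i < n)%nat -> Rabs (x i - t i) <= d) ->
     Rabs (F x - F t) <= K * d).

Lemma Lip_ext n F G : (forall x, F x = G x) -> Lip n F -> Lip n G.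
Proof. intros E [K [B [HK [HB [H1 H2]]]]]. exists K, B; repeat split; auto.
 intros; rewrite <- E; auto. intros; rewrite <- !E; auto. Qed.

Lemma Lip_const n c : Lip n (fun _ => c).
Proof. exists 0, (Rabs c). split; [lra|split; [apply Rabs_pos|split]].
 intros; lra.
 intros. replace (c - c) with 0 by ring. rewrite Rabs_R0. lra. Qed.

Lemma Lip_coord n i : (i < n)%nat -> Lip n (fun x => x i).
Proof. intros Hi. exists 1, 1; repeat split; try lra.
 intros x Hx. destruct (Hx i Hi). rewrite Rabs_pos_eq; lra.
 intros x t d _ _ _ H. rewrite Rmult_1_l. apply H; auto. Qed.

Lemma Lip_plus n F G : Lip n F -> Lip n G -> Lip n (fun x => F x + G x).
Proof. intros [K1 [B1 [HK1 [HB1 [H1 H2]]]]] [K2 [B2 [HK2 [HB2 [H3 H4]]]]].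
 exists (K1 + K2), (B1 + B2); repeat split; try lra.
 intros x Hx. eapply Rle_trans. apply Rabs_triang. specialize (H1 x Hx); specialize (H3 x Hx). lra.
 intros x t d Hx Ht Hd Hc. replace (F x + G x - (F t + G t)) with ((F x - F t) + (G x - G t)) by ring.
 eapply Rle_trans. apply Rabs_triang. specialize (H2 x t d Hx Ht Hd Hc); specialize (H4 x t d Hx Ht Hd Hc). lra. Qed.

Lemma Lip_mult n F G : Lip n F -> Lip n G -> Lip n (fun x => F x * G x).
Proof. intros [K1 [B1 [HK1 [HB1 [H1 H2]]]]] [K2 [B2 [HK2 [HB2 [H3 H4]]]]].
 exists (B1 * K2 + B2 * K1), (B1 * B2); repeat split.
 apply Rplus_le_le_0_compat; apply Rmult_le_pos; auto.
 apply Rmult_le_pos; auto.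
 intros x Hx. rewrite Rabs_mult. apply Rmult_le_compat; try apply Rabs_pos; auto.
 intros x t d Hx Ht Hd Hc.
 replace (F x * G x - F t * G t) with (F x * (G x - G t) + G t * (F x - F t)) by ring.
 eapply Rle_trans. apply Rabs_triang. rewrite !Rabs_mult.
 assert (Rabs (F x) * Rabs (G x - G t) <= B1 * (K2 * d)) by
   (apply Rmult_le_compat; try apply Rabs_pos; auto).
 assert (Rabs (G t) * Rabs (F x - F t) <= B2 * (K1 * d)) by
   (apply Rmult_le_compat; try apply Rabs_pos; auto).
 nra. Qed.

Lemma Lip_sumn n k (G : nat -> vec -> R) : (forall i, (i < k)%nat -> Lip n (G i)) ->
  Lip n (fun x => sumn k (fun i => G i x)).
Proof. induction k; intros H; simpl. apply Lip_const.
 apply Lip_plus. apply IHk; intros; apply H; lia. apply H; lia. Qed.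

Fixpoint toV (n : nat) : Tn n R -> vec :=
  match n with
  | O => fun _ _ => 0
  | S n' => fun x i => match i with O => fst x | S i' => toV n' (snd x) i' end
  end.

Fixpoint ofV (n : nat) (x : vec) : Tn n R :=
  match n with
  | O => tt
  | S n' => (x O, ofV n' (fun i => x (S i)))
  end.

Fixpoint cstT (n : nat) (c : R) : Tn n R :=
  match n with O => tt | S n' => (c, cstT n' c) end.

Lemma toV_ofV n x i : (i < n)%nat -> toV n (ofV n x) i = x i.
Proof. revert x i; induction n; intros x i Hi; [lia|]. destruct i; simpl; auto.
 rewrite IHn by lia. auto. Qed.

Lemma bounded_iff n X : bounded_n n (cstT n 0) (cstT n 1) X <-> inbox n (toV n X).
Proof. induction n; simpl. split; auto. intros _ i Hi; lia.
 destruct X as [x1 X2]. simpl. split.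
 - intros [[H1 H2] H3]. intros i Hi. destruct i; simpl. lra. apply IHn; auto; lia.
 - intros H. split. apply (H O); lia. apply IHn. intros i Hi. apply (H (S i)); lia. Qed.

Lemma close_iff n d X T : close_n n d X T -> forall i, (i < n)%nat -> Rabs (toV n X i - toV n T i) < d.
Proof. induction n; simpl; intros H i Hi; [lia|]. destruct X as [x1 X2], T as [t1 T2].
 destruct H as [H1 H2]. destruct i; simpl; auto. apply IHn; auto; lia. Qed.

Lemma compact_pos n F : Lip n F -> (forall x, inbox n x -> 0 < F x) ->
  exists c, 0 < c /\ forall x, inbox n x -> c <= F x.
Proof. intros [K [B [HK [HB [H1 H2]]]]] Hp.
 set (G := fun X => F (toV n X)).
 set (delta := fun X => match Rlt_dec 0 (G X / (2 * (K + 1))) with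
    | left H => mkposreal _ H | right _ => mkposreal 1 Rlt_0_1 end).
 assert (L : forall l, exists c, 0 < c /\ forall t, In t l -> bounded_n n (cstT n 0) (cstT n 1) t -> c <= G t).
 { induction l as [|t l IH]. exists 1; split; [lra|]. intros t []. 
   destruct IH as [c [Hc Hl]].
   destruct (classic (bounded_n n (cstT n 0) (cstT n 1) t)) as [Hb|Hb].
   - assert (0 < G t) by (apply Hp; apply bounded_iff; auto).
     exists (Rmin c (G t)); split. apply Rmin_glb_lt; auto.
     intros t' [E|E] Hb'. subst t'. apply Rmin_r. eapply Rle_trans. apply Rmin_l. apply Hl; auto.
   - exists c; split; auto. intros t' [E|E] Hb'. subst; contradiction. apply Hl; auto. }
 destruct (classic (exists c, 0 < c /\ forall x, inbox n x -> c <= F x)) as [Hc|Hc]; auto.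
 exfalso. apply (compactness_list n (cstT n 0) (cstT n 1) delta). intros [l Hl]. apply Hc.
 destruct (L l) as [c [Hc0 Hcl]]. exists (c / 2). split; [lra|]. intros x Hx.
 assert (HX : bounded_n n (cstT n 0) (cstT n 1) (ofV n x)).
 { apply bounded_iff. intros i Hi. rewrite toV_ofV; auto. }
 destruct (Hl _ HX) as [t [Hin [Hbt Hcl2]]].
 assert (Hbt' := proj1 (bounded_iff n t) Hbt).
 assert (HGt : 0 < G t) by (apply Hp; auto).
 assert (Hd : pos (delta t) = G t / (2 * (K + 1))).
 { unfold delta. destruct (Rlt_dec 0 (G t / (2 * (K + 1)))) as [h|h]; simpl; auto.
   exfalso; apply h. apply Rdiv_lt_0_compat; lra. }
 assert (E : F x = F (toV n (ofV n x))).
 { assert (Rabs (F x - F (toV n (ofV n x))) <= K * 0).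
   { apply H2; auto. intros i Hi; rewrite toV_ofV; auto. lra.
     intros i Hi. rewrite toV_ofV by auto. replace (x i - x i) with 0 by ring. rewrite Rabs_R0; lra. }
   rewrite Rmult_0_r in H. apply abs_le in H. lra. }
 assert (Hcl3 := close_iff _ _ _ _ Hcl2). rewrite Hd in Hcl3.
 assert (Hdist : Rabs (F (toV n (ofV n x)) - F (toV n t)) <= K * (G t / (2 * (K + 1)))).
 { apply H2; auto. intros i Hi; rewrite toV_ofV; auto.
   apply Rlt_le, Rdiv_lt_0_compat; lra.
   intros i Hi. apply Rlt_le. apply Hcl3; auto. }
 assert (Hct := Hcl t Hin Hbt). fold (G t) in Hdist.
 assert (K * (G t / (2 * (K + 1))) <= G t / 2).
 { apply (Rmult_le_reg_r (2 * (K + 1))). lra.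
   replace (K * (G t / (2 * (K + 1))) * (2 * (K + 1))) with (K * G t) by (field; lra).
   replace (G t / 2 * (2 * (K + 1))) with (G t * (K + 1)) by (field; lra). nra. }
 rewrite E. unfold G in *.
 assert (Habs := abs_le _ _ Hdist). 
 lra. Qed.

Definition supported (n : nat) (m : nat -> bool) (x : vec) : Prop :=
  forall i, (i < n)%nat -> m i = false -> x i = 0.

Fixpoint cntm (n : nat) (m : nat -> bool) : nat :=
  match n with O => O | S k => (cntm k m + (if m k then 1 else 0))%nat end.

Definition mrem (m : nat -> bool) (i0 : nat) : nat -> bool := fun j => andb (m j) (negb (Nat.eqb j i0)).

Lemma cntm_le n m m' : (forall i, (i < n)%nat -> m' i = true -> m i = true) -> (cntm n m' <= cntm n m)%nat.
Proof. induction n; intros H; simpl; [lia|].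
 assert (cntm n m' <= cntm n m)%nat by (apply IHn; intros; apply H; auto; lia).
 destruct (m' n) eqn:E1; destruct (m n) eqn:E2; try lia. rewrite (H n) in E2; auto; discriminate. Qed.

Lemma cntm_rem n m i0 : (i0 < n)%nat -> m i0 = true -> (cntm n (mrem m i0) < cntm n m)%nat.
Proof. induction n; intros Hi Hm; simpl; [lia|]. unfold mrem at 2.
 destruct (Nat.eq_dec i0 n).
 - subst i0. rewrite Nat.eqb_refl, Hm. simpl.
   assert (cntm n (mrem m n) <= cntm n m)%nat.
   { apply cntm_le. intros i Hi' H. unfold mrem in H. apply andb_prop in H. tauto. }
   lia.
 - assert (cntm n (mrem m i0) < cntm n m)%nat by (apply IHn; auto; lia).
   rewrite (proj2 (Nat.eqb_neq n i0)) by lia. destruct (m n); simpl; try lia. Qed.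

Lemma cntm_all n : (cntm n (fun _ => true) <= n)%nat.
Proof. induction n; simpl; lia. Qed.

Lemma cntm_zero n m : cntm n m = O -> forall i, (i < n)%nat -> m i = false.
Proof. induction n; simpl; intros H i Hi; [lia|]. destruct (Nat.eq_dec i n).
 subst. destruct (m n); auto; lia. apply IHn; auto. lia. lia. Qed.

Lemma qform_ext n A x x' : (forall i, (i < n)%nat -> x i = x' i) -> qform n A x x = qform n A x' x'.
Proof. intros H. unfold qform. apply sumn_ext; intros i Hi. apply sumn_ext; intros j Hj.
 rewrite !H by auto. auto. Qed.

Lemma dot_ext n w x x' : (forall i, (i < n)%nat -> x i = x' i) -> dot n w x = dot n w x'.
Proof. intros H. unfold dot. apply sumn_ext; intros i Hi. rewrite H; auto. Qed.

Lemma qform_scale n A x y s : (forall i, (i < n)%nat -> x i = s * y i) -> qform n A x x = s * s * qform n A y y.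
Proof. intros H. unfold qform. rewrite <- sumn_scal. apply sumn_ext; intros i Hi.
 rewrite <- sumn_scal. apply sumn_ext; intros j Hj. rewrite !H by auto. ring. Qed.

Lemma Lip_qform n A : Lip n (fun x => qform n A x x).
Proof. unfold qform. apply (Lip_sumn n n (fun i x => sumn n (fun j => x i * A i j * x j))).
 intros i Hi. apply (Lip_sumn n n (fun j x => x i * A i j * x j)). intros j Hj.
 apply Lip_mult; [apply Lip_mult; [apply Lip_coord; auto| apply Lip_const] | apply Lip_coord; auto]. Qed.

Lemma sumn_nonneg_zero n f : (forall i, (i < n)%nat -> 0 <= f i) -> sumn n f = 0 -> forall i, (i < n)%nat -> f i = 0.
Proof. intros H E i Hi. destruct (Req_dec (f i) 0); auto. exfalso.
 assert (0 < sumn n f) by (apply (sumn_pos n f i); auto; assert (0 <= f i) by auto; lra). lra. Qed.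

Lemma sumn_ge_single n f i : (forall i, (i < n)%nat -> 0 <= f i) -> (i < n)%nat -> f i <= sumn n f.
Proof. induction n; intros H Hi; simpl; [lia|]. assert (0 <= sumn n f) by (apply sumn_nonneg; intros; apply H; lia).
 destruct (Nat.eq_dec i n). subst; lra. assert (f i <= sumn n f) by (apply IHn; auto; lia). assert (0 <= f n) by (apply H; lia). lra. Qed.

Lemma strict_case n A w m : copositive n A ->
  (forall x, Defs.nonneg n x -> supported n m x -> nonzero_vec n x -> 0 < qform n A x x) ->
  exists g, 0 < g /\ forall x, Defs.nonneg n x -> supported n m x -> g * (dot n w x * dot n w x) <= qform n A x x.
Proof. intros HC Hpos.
 set (F := fun x => qform n A x x + (sumn n (fun i => x i) + -1) * (sumn n (fun i => x i) + -1)
    + sumn n (fun i => if m i then 0 else x i * x i)).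
 assert (HL : Lip n F).
 { unfold F. apply Lip_plus. apply Lip_plus. apply Lip_qform.
   apply Lip_mult; apply Lip_plus; try apply Lip_const; apply (Lip_sumn n n (fun i x => x i)); intros; apply Lip_coord; auto.
   apply (Lip_sumn n n (fun i x => if m i then 0 else x i * x i)). intros i Hi. destruct (m i).
   apply Lip_const. apply Lip_mult; apply Lip_coord; auto. }
 assert (HF : forall x, inbox n x -> 0 < F x).
 { intros x Hx. assert (Hn : Defs.nonneg n x) by (intros i Hi; apply Hx; auto).
   assert (Hq : 0 <= qform n A x x) by (apply HC; auto).
   assert (H3 : 0 <= sumn n (fun i => if m i then 0 else x i * x i)).
   { apply sumn_nonneg. intros i Hi. destruct (m i). lra. apply Rle_0_sqr. }
   assert (H2 : 0 <= (sumn n (fun i => x i) + -1) * (sumn n (fun i => x i) + -1)) by apply Rle_0_sqr.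
   unfold F. destruct (classic (supported n m x)) as [Hs|Hs].
   - destruct (classic (nonzero_vec n x)) as [Hz|Hz].
     + assert (0 < qform n A x x) by (apply Hpos; auto). lra.
     + assert (E : sumn n (fun i => x i) = 0).
       { apply sumn_zero. intros i Hi. destruct (Req_dec (x i) 0); auto. exfalso; apply Hz; exists i; auto. }
       rewrite E. lra.
   - assert (0 < sumn n (fun i => if m i then 0 else x i * x i)).
     { apply NNPP. intros Hc. apply Hs. intros i Hi Hm. destruct (Req_dec (x i) 0); auto. exfalso. apply Hc.
       apply (sumn_pos n _ i); auto. intros j Hj. destruct (m j). lra. apply Rle_0_sqr.
       rewrite Hm. assert (0 < x i * x i) by (apply Rsqr_pos_lt; auto). auto. }
     lra. }
 destruct (compact_pos n F HL HF) as [c [Hc Hcb]].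
 set (W := sumn n (fun i => Rabs (w i))).
 assert (HW : 0 <= W) by (apply sumn_nonneg; intros; apply Rabs_pos).
 exists (c / (W * W + 1)). split. apply Rdiv_lt_0_compat; nra.
 intros x Hx Hs. set (S := sumn n (fun i => x i)).
 assert (HS : 0 <= S) by (apply sumn_nonneg; auto).
 destruct (Req_dec S 0) as [E|E].
 - assert (Hx0 := sumn_nonneg_zero n (fun i => x i) Hx E).
   assert (Hd : dot n w x = 0) by (unfold dot; apply sumn_zero; intros i Hi; rewrite Hx0 by auto; ring).
   assert (Hq : qform n A x x = 0).
   { unfold qform. apply sumn_zero; intros i Hi. apply sumn_zero; intros j Hj. rewrite Hx0 by auto. ring. }
   rewrite Hd, Hq. lra.
 - set (y := fun i => x i / S).
   assert (Hxy : forall i, (i < n)%nat -> x i = S * y i) by (intros; unfold y; field; auto).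
   assert (Hy : inbox n y).
   { intros i Hi. unfold y. assert (0 <= x i) by auto. assert (x i <= S) by (apply (sumn_ge_single n (fun i => x i)); auto).
     split. unfold Rdiv; apply Rmult_le_pos; [lra| apply Rlt_le, Rinv_0_lt_compat; lra]. apply (Rmult_le_reg_r S). lra. field_simplify; lra. }
   assert (HSy : sumn n (fun i => y i) = 1).
   { unfold y. rewrite (sumn_ext n _ (fun i => / S * x i)) by (intros; unfold Rdiv; ring).
     rewrite sumn_scal. change (sumn n x) with S. field; auto. }
   assert (H3 : sumn n (fun i => if m i then 0 else y i * y i) = 0).
   { apply sumn_zero. intros i Hi. destruct (m i) eqn:Em. auto. unfold y. rewrite (Hs i Hi Em). field; auto. }
   assert (Hqy := Hcb y Hy). unfold F in Hqy. rewrite HSy, H3 in Hqy.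
   rewrite (qform_scale n A x y S Hxy).
   assert (Hdx : dot n w x = S * dot n w y).
   { unfold dot. rewrite <- sumn_scal. apply sumn_ext; intros i Hi. rewrite Hxy by auto. ring. }
   assert (Hdy : Rabs (dot n w y) <= W).
   { unfold dot. eapply Rle_trans. apply sumn_abs. apply sumn_le. intros i Hi. rewrite Rabs_mult.
     destruct (Hy i Hi). rewrite (Rabs_pos_eq (y i)) by auto. assert (0 <= Rabs (w i)) by apply Rabs_pos. nra. }
   assert (Hdy2 : dot n w y * dot n w y <= W * W).
   { assert (Rabs (dot n w y) * Rabs (dot n w y) <= W * W) by (apply Rmult_le_compat; auto; apply Rabs_pos).
     rewrite <- Rabs_mult in H. rewrite Rabs_pos_eq in H by apply Rle_0_sqr. auto. }
   rewrite Hdx.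
   assert (c / (W * W + 1) * (dot n w y * dot n w y) <= c).
   { apply (Rmult_le_reg_r (W * W + 1)). nra.
     replace (c / (W * W + 1) * (dot n w y * dot n w y) * (W * W + 1)) with (c * (dot n w y * dot n w y)) by (field; nra).
     nra. }
   assert (0 <= S * S) by apply Rle_0_sqr.
   replace (c / (W * W + 1) * (S * dot n w y * (S * dot n w y))) with (S * S * (c / (W * W + 1) * (dot n w y * dot n w y))) by ring.
   apply Rmult_le_compat_l; auto. lra.
Qed.

Lemma fin_common n (Q : nat -> R -> Prop) :
  (forall i g g', Q i g -> 0 < g' <= g -> Q i g') ->
  (forall i, (i < n)%nat -> exists g, 0 < g /\ Q i g) ->
  exists g, 0 < g /\ forall i, (i < n)%nat -> Q i g.
Proof. intros Hm; induction n; intros H.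
 - exists 1; split; [lra|]; intros; lia.
 - destruct IHn as [g1 [Hg1 H1]]. intros; apply H; lia.
   destruct (H n ltac:(lia)) as [g2 [Hg2 H2]].
   exists (Rmin g1 g2). split. apply Rmin_glb_lt; auto.
   intros i Hi. destruct (Nat.eq_dec i n).
   + subst. apply (Hm n g2); auto. split. apply Rmin_glb_lt; auto. apply Rmin_r.
   + apply (Hm i g1). apply H1; lia. split. apply Rmin_glb_lt; auto. apply Rmin_l. Qed.

Lemma stepB n A w : copositive n A -> (forall u, is_zero_of n A u -> dot n w u = 0) ->
  forall k m, (cntm n m <= k)%nat ->
  exists g, 0 < g /\ forall x, Defs.nonneg n x -> supported n m x -> g * (dot n w x * dot n w x) <= qform n A x x.
Proof. intros HC Hz. induction k; intros m Hk.
 - destruct (classic (exists u, is_zero_of n A u /\ supported n m u)) as [[u [Hu Hs]]|Hn].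
   + exfalso. destruct Hu as [_ [[i [Hi Hui]] _]]. apply Hui. apply Hs; auto.
     apply cntm_zero with n; auto. lia.
   + apply strict_case; auto. intros x Hx Hs Hnz.
     assert (0 <= qform n A x x) by (apply HC; auto).
     destruct (Req_dec (qform n A x x) 0); [|lra]. exfalso; apply Hn; exists x; repeat split; auto.
 - destruct (classic (exists u, is_zero_of n A u /\ supported n m u)) as [[u [Hu Hs]]|Hn].
   2:{ apply strict_case; auto. intros x Hx Hs Hnz.
     assert (0 <= qform n A x x) by (apply HC; auto).
     destruct (Req_dec (qform n A x x) 0); [|lra]. exfalso; apply Hn; exists x; repeat split; auto. }
   set (Q := fun i g => u i <> 0 -> forall x, Defs.nonneg n x -> supported n (mrem m i) x ->
      g * (dot n w x * dot n w x) <= qform n A x x).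
   destruct (fin_common n Q) as [g [Hg HQ]].
   { intros i g g' Hq [Hg' Hgg] Hu' x Hx Hs'. specialize (Hq Hu' x Hx Hs').
     assert (0 <= dot n w x * dot n w x) by apply Rle_0_sqr. nra. }
   { intros i Hi. destruct (Req_dec (u i) 0) as [E|E].
     - exists 1; split; [lra|]. intros h; contradiction.
     - assert (Hmi : m i = true). { destruct (m i) eqn:Em; [reflexivity| exfalso; apply E; apply Hs; auto]. }
       assert (cntm n (mrem m i) < cntm n m)%nat by (apply cntm_rem; auto).
       destruct (IHk (mrem m i)) as [g [Hg Hgq]]. lia.
       exists g; split; auto. intros _; auto. }
   exists g; split; auto. intros x Hx Hsx.
   destruct Hu as [Hun [Hunz Huq]].
   assert (Hdu : dot n w u = 0) by (apply Hz; repeat split; auto).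
   destruct (argmin_ex n (fun i => u i <> 0) (fun i => x i / u i)) as [i0 [Hi0 [Hu0 Hmin]]].
   { destruct Hunz as [i [Hi Hui]]; exists i; auto. }
   assert (Hu0p : 0 < u i0) by (assert (0 <= u i0) by (apply Hun; auto); lra).
   set (t := x i0 / u i0).
   assert (Ht : 0 <= t) by (unfold t; unfold Rdiv; apply Rmult_le_pos; [apply Hx; auto| apply Rlt_le, Rinv_0_lt_compat; lra]).
   set (y := vadd x (- t) u).
   assert (Hy : Defs.nonneg n y).
   { intros i Hi. unfold y, vadd. destruct (Req_dec (u i) 0) as [E|E].
     rewrite E. assert (0 <= x i) by (apply Hx; auto). lra.
     assert (Hr := Hmin i Hi E). fold t in Hr.
     assert (0 < u i) by (assert (0 <= u i) by (apply Hun; auto); lra).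
     apply (Rmult_le_compat_r (u i)) in Hr; [|lra].
     replace (x i / u i * u i) with (x i) in Hr by (field; lra). lra. }
   assert (Hys : supported n (mrem m i0) y).
   { intros i Hi Hm. unfold mrem in Hm. unfold y, vadd.
     destruct (m i) eqn:Em.
     - simpl in Hm. destruct (Nat.eqb_spec i i0); [|discriminate]. subst i. unfold t. field. lra.
     - rewrite (Hsx i Hi Em), (Hs i Hi Em). ring. }
   assert (HQy := HQ i0 Hi0 Hu0 y Hy Hys).
   assert (Ex : qform n A x x = qform n A (vadd y t u) (vadd y t u)).
   { apply qform_ext. intros i Hi. unfold y, vadd. ring. }
   assert (Edx : dot n w x = dot n w y).
   { unfold y. rewrite dot_vadd, Hdu. ring. }
   rewrite Ex, Edx. rewrite qform_expand by apply HC. rewrite Huq.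
   rewrite (qform_sym n A y u) by apply HC.
   assert (0 <= qform n A u y) by (apply qform_cross_nonneg; auto).
   assert (0 <= t * qform n A u y) by (apply Rmult_le_pos; auto).
   lra.
Qed.

Theorem corollary4p4 (n : nat) (A : mat) (w : vec) :
  copositive n A -> nonzero_vec n w ->
  (irreducible_wrt n A (outer w) <->
   exists u, minimal_zero n A u /\ dot n w u <> 0).
Proof. intros HC Hw. split.
 - intros Hirr. apply NNPP. intros Hno.
   assert (Hz : forall u, is_zero_of n A u -> dot n w u = 0).
   { intros u Hu. destruct (Req_dec (dot n w u) 0); auto. exfalso.
     destruct (min_zero_exists n A w HC u Hu H) as [v Hv]. apply Hno; exists v; auto. }
   destruct (stepB n A w HC Hz n (fun _ => true) (cntm_all n)) as [g [Hg Hgq]].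
   apply Hirr. exists g. split; auto. split.
   + intros i j Hi Hj. unfold msub_scal, outer. rewrite (proj1 HC i j Hi Hj). ring.
   + intros x Hx. rewrite qform_msub.
     assert (g * (dot n w x * dot n w x) <= qform n A x x).
     { apply Hgq; auto. intros i _ E; discriminate. }
     lra.
 - intros [u [[[Hun [_ Huq]] _] Hd]] [g [Hg [_ Hcop]]].
   assert (H := Hcop u Hun). rewrite qform_msub, Huq in H.
   assert (0 < dot n w u * dot n w u) by (apply Rsqr_pos_lt; auto).
   nra.
Qed.
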